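(* Let $(D,\mathrm{left},\mathrm{right})$ be an interval domain. For $a\le b$ in $\max(D)$ let $\phi^{-1}[a,b]$ denote the unique $z\in D$ with $\mathrm{left}(z)=a$ and $\mathrm{right}(z)=b$. Then: (i) if $a\ll p\ll b$ in $(\max(D),\le)$, then $\phi^{-1}[a,b]\ll p$ in $D$; (ii) the interval topology on the bicontinuous poset $(\max(D),\le)$ coincides with the relative Scott topology that $\max(D)$ inherits from $D$. Thus $(\max(D),\le)$ is a globally hyperbolic poset.
   Context: For a poset $(P,\sqsubseteq)$: directed (resp. filtered) sets are nonempty sets in which any two elements have an upper (resp. lower) bound in the set; $\bigsqcup S$ is the supremum; $x\ll y$ iff for every directed $S\subseteq P$ with a supremum, $y\sqsubseteq\bigsqcup S$ implies $x\sqsubseteq s$ for some $s\in S$; $\Uparrow x=\{a: x\ll a\}$, $\Downarrow x=\{a:a\ll x\}$. $P$ is continuous if there is $B\subseteq P$ such that for each $x$, $B\cap\Downarrow x$ contains a directed set with supremum $x$. A continuous poset is bicontinuous if (1) $x\ll y$ iff for every filtered $S$ having an infimum, $\bigwedge S\sqsubseteq x$ implies $s\sqsubseteq y$ for some $s\in S$; and (2) each $\Uparrow x$ is filtered with infimum $x$. On a bicontinuous poset the sets $(a,b)=\{x: a\ll x\ll b\}$ form a basis of the interval topology. A globally hyperbolic poset is a bicontinuous poset in which every closed interval $\{x: a\le x\le b\}$ is compact in the interval topology. A continuous dcpo is a continuous poset in which every directed set has a supremum. $\max(P)$ is the set of maximal elements, $x\sqcap y$ the infimum of $\{x,y\}$.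 The Scott topology consists of upper sets $U$ such that $\bigsqcup S\in U$ implies $S\cap U\ne\emptyset$ for directed $S$. An interval poset is a poset $D$ with functions $\mathrm{left},\mathrm{right}:D\to\max(D)$ such that (only named infima are assumed to exist): (i) $x=\mathrm{left}(x)\sqcap\mathrm{right}(x)$ for all $x$; (ii) if $\mathrm{right}(x)=\mathrm{left}(y)$ then $\mathrm{left}(x\sqcap y)=\mathrm{left}(x)$ and $\mathrm{right}(x\sqcap y)=\mathrm{right}(y)$; (iii) for $p\in\max(D)$ with $x\sqsubseteq p$: $\mathrm{left}(\mathrm{left}(x)\sqcap p)=\mathrm{left}(x)$, $\mathrm{right}(\mathrm{left}(x)\sqcap p)=p$, $\mathrm{left}(p\sqcap\mathrm{right}(x))=p$, $\mathrm{right}(p\sqcap\mathrm{right}(x))=\mathrm{right}(x)$. On $\max(D)$ define $a\le b$ iff $a=\mathrm{left}(z)$, $b=\mathrm{right}(z)$ for some $z\in D$; this is a partial order, and $x\mapsto[\mathrm{left}(x),\mathrm{right}(x)]$ is an order isomorphism from $D$ onto the closed intervals of $(\max(D),\le)$ under reverse inclusion. For $p,q\in\max(D)$ let $[p,\cdot]=\mathrm{left}^{-1}(p)$ and $[\cdot,q]=\mathrm{right}^{-1}(q)$, regarded as subposets of $D$. An interval domain is an interval poset $(D,\mathrm{left},\mathrm{right})$ such that $D$ is a continuous dcpo and: (i) if $p\in\Uparrow x\cap\max(D)$ then $\Uparrow(\mathrm{left}(x)\sqcap p)\ne\emptyset$ and $\Uparrow(p\sqcap\mathrm{right}(x))\ne\emptyset$;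 (ii) for all $x\in D$ the following are equivalent: (a) $\Uparrow x\ne\emptyset$; (b) for all $y\in[\mathrm{left}(x),\cdot]$ with $y\sqsubseteq x$, $y\ll\mathrm{right}(y)$ in the poset $[\cdot,\mathrm{right}(y)]$; (c) for all $y\in[\cdot,\mathrm{right}(x)]$ with $y\sqsubseteq x$, $y\ll\mathrm{left}(y)$ in the poset $[\mathrm{left}(y),\cdot]$; (iii)(a) for every directed $S\subseteq[p,\cdot]$, $\mathrm{left}(\bigsqcup S)=p$ and $\mathrm{right}(\bigsqcup S)=\mathrm{right}(\bigsqcup T)$ for every directed $T\subseteq[q,\cdot]$ with $\mathrm{right}(T)=\mathrm{right}(S)$ (images); (iii)(b) for every directed $S\subseteq[\cdot,q]$, $\mathrm{right}(\bigsqcup S)=q$ and $\mathrm{left}(\bigsqcup S)=\mathrm{left}(\bigsqcup T)$ for every directed $T\subseteq[\cdot,p]$ with $\mathrm{left}(T)=\mathrm{left}(S)$; (iv) for all $x\in D$, $\{y\in\max(D): x\sqsubseteq y\}$ is compact in the relative Scott topology. For an interval domain, $(\max(D),\le)$ is a bicontinuous poset. *)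

(* Defs.v *)
From Stdlib Require Import List.
Set Implicit Arguments.

Section OrderTheory.
Variable T : Type.
Variable le : T -> T -> Prop.

Definition is_partial_order : Prop :=
  (forall x, le x x) /\
  (forall x y, le x y -> le y x -> x = y) /\
  (forall x y z, le x y -> le y z -> le x z).

Definition directed (S : T -> Prop) : Prop :=
  (exists x, S x) /\
  (forall x y, S x -> S y -> exists z, S z /\ le x z /\ le y z).

Definition filtered (S : T -> Prop) : Prop :=
  (exists x, S x) /\
  (forall x y, S x -> S y -> exists z, S z /\ le z x /\ le z y).

Definition is_sup (S : T -> Prop) (s : T) : Prop :=
  (forall x, S x -> le x s) /\ (forall u, (forall x, S x -> le x u) -> le s u).

Definition is_inf (S : T -> Prop) (i : T) : Prop :=
  (forall x, S x -> le i x) /\ (forall u, (forall x, S x -> le u x) -> le u i).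

Definition is_inf2 (a b z : T) : Prop := is_inf (fun w => w = a \/ w = b) z.

Definition is_sup_in (P : T -> Prop) (S : T -> Prop) (s : T) : Prop :=
  P s /\ (forall x, S x -> le x s) /\
  (forall u, P u -> (forall x, S x -> le x u) -> le s u).

Definition waybelow_in (P : T -> Prop) (x y : T) : Prop :=
  forall S : T -> Prop, (forall s, S s -> P s) -> directed S ->
    forall s, is_sup_in P S s -> le y s -> exists t, S t /\ le x t.

Definition waybelow (x y : T) : Prop :=
  forall S : T -> Prop, directed S ->
    forall s, is_sup S s -> le y s -> exists t, S t /\ le x t.

Definition continuous_poset : Prop :=
  is_partial_order /\
  exists B : T -> Prop, forall x, exists S : T -> Prop,
    (forall s, S s -> B s /\ waybelow s x) /\ directed S /\ is_sup S x.

Definition bicontinuous : Prop :=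
  continuous_poset /\
  (forall x y, waybelow x y <->
     (forall (S : T -> Prop) i, filtered S -> is_inf S i -> le i x ->
        exists s, S s /\ le s y)) /\
  (forall x, filtered (fun a => waybelow x a) /\ is_inf (fun a => waybelow x a) x).

(* open sets of the interval topology: generated by the basis
   (a,b) = {x | a << x << b} *)
Definition interval_open (U : T -> Prop) : Prop :=
  forall x, U x -> exists a b, waybelow a x /\ waybelow x b /\
    (forall y, waybelow a y -> waybelow y b -> U y).

Definition compact_wrt (opn : (T -> Prop) -> Prop) (K : T -> Prop) : Prop :=
  forall C : (T -> Prop) -> Prop,
    (forall U, C U -> opn U) ->
    (forall x, K x -> exists U, C U /\ U x) ->
    exists l : list (T -> Prop),
      (forall U, In U l -> C U) /\ (forall x, K x -> exists U, In U l /\ U x).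

Definition globally_hyperbolic : Prop :=
  bicontinuous /\
  forall a b, compact_wrt interval_open (fun x => le a x /\ le x b).

Definition continuous_dcpo : Prop :=
  continuous_poset /\ forall S, directed S -> exists s, is_sup S s.

Definition scott_open (U : T -> Prop) : Prop :=
  (forall x y, U x -> le x y -> U y) /\
  (forall S, directed S -> forall s, is_sup S s -> U s -> exists x, S x /\ U x).

Definition is_max (m : T) : Prop := forall y, le m y -> y = m.

End OrderTheory.

Section IntervalDomain.
Variable D : Type.
Variable le : D -> D -> Prop.
Variables left right : D -> D.

Definition MaxD : Type := { p : D | is_max le p }.

Definition leM (a b : MaxD) : Prop :=
  exists z, left z = proj1_sig a /\ right z = proj1_sig b.

Definition rel_scott_open (V : MaxD -> Prop) : Prop :=
  exists U : D -> Prop, scott_open le U /\ forall m : MaxD, V m <-> U (proj1_sig m).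

Definition interval_poset : Prop :=
  is_partial_order le /\
  (forall x, is_max le (left x) /\ is_max le (right x)) /\
  (forall x, is_inf2 le (left x) (right x) x) /\
  (forall x y, right x = left y ->
     exists z, is_inf2 le x y z /\ left z = left x /\ right z = right y) /\
  (forall x p, is_max le p -> le x p ->
     (exists z, is_inf2 le (left x) p z /\ left z = left x /\ right z = p) /\
     (exists z, is_inf2 le p (right x) z /\ left z = p /\ right z = right x)).

Definition same_image (f : D -> D) (S T : D -> Prop) : Prop :=
  forall r, (exists x, S x /\ f x = r) <-> (exists x, T x /\ f x = r).

Definition interval_domain : Prop :=
  interval_poset /\ continuous_dcpo le /\
  (* (i) *)
  (forall x p, is_max le p -> waybelow le x p ->
     (forall z, is_inf2 le (left x) p z -> exists w, waybelow le z w) /\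
     (forall z, is_inf2 le p (right x) z -> exists w, waybelow le z w)) /\
  (* (ii) *)
  (forall x,
     ((exists a, waybelow le x a) <->
      (forall y, left y = left x -> le y x ->
         waybelow_in le (fun w => right w = right y) y (right y))) /\
     ((exists a, waybelow le x a) <->
      (forall y, right y = right x -> le y x ->
         waybelow_in le (fun w => left w = left y) y (left y)))) /\
  (* (iii)(a) *)
  (forall p (S : D -> Prop) s, is_max le p -> (forall x, S x -> left x = p) ->
     directed le S -> is_sup le S s ->
     left s = p /\
     (forall q (T : D -> Prop) t, is_max le q -> (forall x, T x -> left x = q) ->
        directed le T -> is_sup le T t -> same_image right T S ->
        right s = right t)) /\
  (* (iii)(b) *)
  (forall q (S : D -> Prop) s, is_max le q -> (forall x, S x -> right x = q) ->
     directed le S -> is_sup le S s ->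
     right s = q /\
     (forall p (T : D -> Prop) t, is_max le p -> (forall x, T x -> right x = p) ->
        directed le T -> is_sup le T t -> same_image left T S ->
        left s = left t)) /\
  (* (iv) *)
  (forall x, compact_wrt rel_scott_open (fun m : MaxD => le x (proj1_sig m))).

End IntervalDomain.

(* Main.v *)
Require Import Defs.
From Stdlib Require Import List Classical FunctionalExtensionality PropExtensionality.

Lemma inf2_sym (T : Type) (le : T -> T -> Prop) a b z :
  is_inf2 le a b z -> is_inf2 le b a z.
Proof.
  intros [H1 H2]; split.
  - intros x Hx; apply H1; tauto.
  - intros u Hu; apply H2; intros x Hx; apply Hu; tauto.
Qed.

Lemma sup_least (T : Type) (R : T -> T -> Prop) S s1 s2 :
  is_sup R S s1 -> is_sup R S s2 -> R s1 s2.
Proof. intros [_ H1] [H2 _]; apply H1; exact H2. Qed.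

Section Basics.
Context {D : Type} {le : D -> D -> Prop} {left right : D -> D}.
Hypothesis HD : interval_domain le left right.

Definition ML (a b : D) := exists z, left z = a /\ right z = b.

Lemma po : is_partial_order le.
Proof. destruct HD as [[H _] _]; exact H. Qed.
Lemma lrefl x : le x x. Proof. apply po. Qed.
Lemma lanti x y : le x y -> le y x -> x = y. Proof. apply po. Qed.
Lemma ltrans x y z : le x y -> le y z -> le x z. Proof. apply po. Qed.

Lemma lmax x : is_max le (left x).
Proof. destruct HD as [[_ [H _]] _]; apply H. Qed.
Lemma rmax x : is_max le (right x).
Proof. destruct HD as [[_ [H _]] _]; apply H. Qed.
Lemma inf_lr x : is_inf2 le (left x) (right x) x.
Proof. destruct HD as [[_ [_ [H _]]] _]; apply H. Qed.
Lemma inf2_uniq a b z z' : is_inf2 le a b z -> is_inf2 le a b z' -> z = z'.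
Proof.
  intros [H1 H2] [H1' H2']. apply lanti.
  - apply H2'; exact H1.
  - apply H2; exact H1'.
Qed.
Lemma le_left x : le x (left x).
Proof. apply (proj1 (inf_lr x)); auto. Qed.
Lemma le_right x : le x (right x).
Proof. apply (proj1 (inf_lr x)); auto. Qed.
Lemma max_lr p : is_max le p -> left p = p /\ right p = p.
Proof. intros Hp; split; apply Hp; [apply le_left | apply le_right]. Qed.
Lemma ML_max a b : ML a b -> is_max le a /\ is_max le b.
Proof. intros [z [<- <-]]; split; [apply lmax|apply rmax]. Qed.
Lemma ML_refl p : is_max le p -> ML p p.
Proof. intros Hp; exists p; apply max_lr; auto. Qed.
Lemma ML_self x : ML (left x) (right x).
Proof. exists x; auto. Qed.
Lemma below_max x p : is_max le p -> le x p -> ML (left x) p /\ ML p (right x).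
Proof.
  intros Hp Hx. destruct HD as [[_ [_ [_ [_ H]]]] _].
  destruct (H x p Hp Hx) as [[z [_ [H1 H2]]] [z' [_ [H3 H4]]]].
  split; [exists z | exists z']; auto.
Qed.
Lemma ML_trans a b c : ML a b -> ML b c -> ML a c.
Proof.
  intros [z1 [H1 H2]] [z2 [H3 H4]]. destruct HD as [[_ [_ [_ [H _]]]] _].
  destruct (H z1 z2) as [z [_ [H5 H6]]]; [congruence|].
  exists z; split; congruence.
Qed.
Lemma same_ends x y : left x = left y -> right x = right y -> x = y.
Proof.
  intros H1 H2. apply (inf2_uniq (left x) (right x)); [apply inf_lr|].
  rewrite H1, H2; apply inf_lr.
Qed.
Lemma max_above x p : ML (left x) p -> ML p (right x) -> le x p.
Proof.
  intros [z1 [H1 H2]] [z2 [H3 H4]]. destruct HD as [[_ [_ [_ [H _]]]] _].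
  destruct (H z1 z2) as [z [Hz [H5 H6]]]; [congruence|].
  assert (z = x) as <- by (apply same_ends; congruence).
  apply ltrans with z1; [apply (proj1 Hz); auto|].
  rewrite <- H2; apply le_right.
Qed.
Lemma ML_antisym a b : ML a b -> ML b a -> a = b.
Proof.
  intros Hab Hba. destruct (ML_max _ _ Hab) as [Ha Hb].
  assert (le a b).
  { destruct (max_lr a Ha) as [E1 E2].
    apply max_above; rewrite ?E1, ?E2; auto. }
  symmetry; apply Ha; auto.
Qed.
Lemma le_intro x y : ML (left x) (left y) -> ML (right y) (right x) -> le x y.
Proof.
  intros H1 H2. apply (proj2 (inf_lr y)).
  pose proof (ML_self y).
  intros w [-> | ->]; apply max_above; auto;
    first [ apply ML_trans with (right y); now auto
          | apply ML_trans with (left y); now auto ].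
Qed.
Lemma le_elim x y : le x y -> ML (left x) (left y) /\ ML (right y) (right x).
Proof.
  intros H. split.
  - apply (below_max x (left y)); [apply lmax|]. apply ltrans with y; auto; apply le_left.
  - apply (below_max x (right y)); [apply rmax|]. apply ltrans with y; auto; apply le_right.
Qed.
Lemma interval a b : ML a b -> exists z, left z = a /\ right z = b.
Proof. auto. Qed.


Lemma sig_eq (a b : MaxD le) : proj1_sig a = proj1_sig b -> a = b.
Proof. destruct a, b; simpl; intros ->; f_equal; apply proof_irrelevance. Qed.

Notation LM := (@leM D le left right).

Lemma leM_ML (a b : MaxD le) : LM a b <-> ML (proj1_sig a) (proj1_sig b).
Proof. reflexivity. Qed.

Lemma exL x : exists m : MaxD le, proj1_sig m = left x.
Proof. exists (exist _ (left x) (lmax x)); reflexivity. Qed.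
Lemma exR x : exists m : MaxD le, proj1_sig m = right x.
Proof. exists (exist _ (right x) (rmax x)); reflexivity. Qed.

Lemma LM_refl a : LM a a.
Proof. apply ML_refl, (proj2_sig a). Qed.
Lemma LM_trans a b c : LM a b -> LM b c -> LM a c.
Proof. apply ML_trans. Qed.
Lemma LM_anti a b : LM a b -> LM b a -> a = b.
Proof. intros; apply sig_eq, ML_antisym; auto. Qed.

Definition Lset (f : D -> D) (X : D -> Prop) : MaxD le -> Prop :=
  fun m => exists x, X x /\ f x = proj1_sig m.

Definition Fam (A : MaxD le -> Prop) (q : D) : D -> Prop :=
  fun z => right z = q /\ exists t, A t /\ left z = proj1_sig t.

Lemma dcpo_sup S : directed le S -> exists s, is_sup le S s.
Proof. destruct HD as [_ [[_ H] _]]; apply H. Qed.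

Lemma Fam_directed A (q : MaxD le) : directed LM A -> (forall t, A t -> LM t q) ->
  directed le (Fam A (proj1_sig q)).
Proof.
  intros [[t0 Ht0] Hd] Hb. split.
  - destruct (Hb t0 Ht0) as [z [H1 H2]]. exists z; split; auto. exists t0; auto.
  - intros x y [Hx1 [tx [Htx Hx2]]] [Hy1 [ty [Hty Hy2]]].
    destruct (Hd tx ty Htx Hty) as [t [Ht [H1 H2]]].
    destruct (Hb t Ht) as [z [Hz1 Hz2]].
    exists z; split; [split; auto; exists t; auto|].
    split; apply le_intro; try rewrite Hx2; try rewrite Hy2; try rewrite Hz1; auto;
      rewrite Hz2; try rewrite Hx1; try rewrite Hy1; apply ML_refl, (proj2_sig q).
Qed.

Lemma Fam_lset A (q : MaxD le) : (forall t, A t -> LM t q) ->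
  forall m, Lset left (Fam A (proj1_sig q)) m <-> A m.
Proof.
  intros Hb m; split.
  - intros [x [[_ [t [Ht E]]] E']]. replace m with t; auto. apply sig_eq; congruence.
  - intros Hm. destruct (Hb m Hm) as [z [H1 H2]]. exists z; split; auto.
    split; auto. exists m; auto.
Qed.

Lemma iiib q S s : is_max le q -> (forall x, S x -> right x = q) ->
     directed le S -> is_sup le S s ->
     right s = q /\
     (forall p (T : D -> Prop) t, is_max le p -> (forall x, T x -> right x = p) ->
        directed le T -> is_sup le T t -> same_image left T S ->
        left s = left t).
Proof. destruct HD as [_ [_ [_ [_ [_ [H _]]]]]]; apply H. Qed.

Lemma Fam_right A (q : MaxD le) z : directed LM A -> (forall t, A t -> LM t q) ->
  is_sup le (Fam A (proj1_sig q)) z -> right z = proj1_sig q.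
Proof.
  intros Hd Hb Hs. apply (iiib (proj1_sig q) (Fam A (proj1_sig q)) z); auto.
  - apply (proj2_sig q).
  - intros x [H _]; auto.
  - apply Fam_directed; auto.
Qed.

Lemma Fam_left_indep A (q u : MaxD le) zq zu : directed LM A ->
  (forall t, A t -> LM t q) -> (forall t, A t -> LM t u) ->
  is_sup le (Fam A (proj1_sig q)) zq -> is_sup le (Fam A (proj1_sig u)) zu ->
  left zq = left zu.
Proof.
  intros Hd Hq Hu Sq Su.
  refine (proj2 (iiib (proj1_sig q) (Fam A (proj1_sig q)) zq _ _ _ Sq)
     (proj1_sig u) (Fam A (proj1_sig u)) zu _ _ _ Su _).
  - apply (proj2_sig q).
  - intros x [H _]; auto.
  - apply Fam_directed; auto.
  - apply (proj2_sig u).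
  - intros x [H _]; auto.
  - apply Fam_directed; auto.
  - intros r. pose proof (Fam_lset A q Hq) as F1. pose proof (Fam_lset A u Hu) as F2.
    split.
    + intros [x [Hx <-]]. destruct (exL x) as [m Hm].
      assert (A m) by (apply F2; exists x; auto).
      destruct (proj2 (F1 m) H) as [y [Hy Ey]]. exists y; split; congruence.
    + intros [x [Hx <-]]. destruct (exL x) as [m Hm].
      assert (A m) by (apply F1; exists x; auto).
      destruct (proj2 (F2 m) H) as [y [Hy Ey]]. exists y; split; congruence.
Qed.

Lemma K0 A (q : MaxD le) z (L : MaxD le) : directed LM A -> (forall t, A t -> LM t q) ->
  is_sup le (Fam A (proj1_sig q)) z -> proj1_sig L = left z -> is_sup LM A L.
Proof.
  intros Hd Hb Hs EL. split.
  - intros t Ht. destruct (Hb t Ht) as [w [H1 H2]].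
    assert (Fam A (proj1_sig q) w) as Hw by (split; auto; exists t; auto).
    destruct (le_elim _ _ (proj1 Hs w Hw)) as [E _].
    apply leM_ML. rewrite EL, <- H1. exact E.
  - intros u Hu. destruct (dcpo_sup (Fam A (proj1_sig u))) as [zu Hzu].
    { apply Fam_directed; auto. }
    apply leM_ML. rewrite EL, (Fam_left_indep A q u z zu); auto.
    rewrite <- (Fam_right A u zu); auto. apply ML_self.
Qed.

Lemma Lset_directed X : directed le X -> directed LM (Lset left X).
Proof.
  intros [[x0 H0] Hd]. split.
  - destruct (exL x0) as [m Hm]. exists m, x0; auto.
  - intros a b [x [Hx Ea]] [y [Hy Eb]].
    destruct (Hd x y Hx Hy) as [w [Hw [H1 H2]]].
    destruct (exL w) as [m Hm]. exists m; split; [exists w; auto|].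
    split; apply leM_ML; rewrite <- ?Ea, <- ?Eb, Hm; apply le_elim; auto.
Qed.

Lemma K1 X z (m : MaxD le) : directed le X -> is_sup le X z -> proj1_sig m = left z ->
  is_sup LM (Lset left X) m.
Proof.
  intros Hd Hs Em.
  assert (Hub : forall a, Lset left X a -> LM a m).
  { intros a [x [Hx Ea]]. apply leM_ML; rewrite <- Ea, Em. apply le_elim, (proj1 Hs); auto. }
  destruct (dcpo_sup (Fam (Lset left X) (proj1_sig m))) as [zq Hzq].
  { apply Fam_directed; auto. apply Lset_directed; auto. }
  destruct (exL zq) as [L HL].
  assert (HsL : is_sup LM (Lset left X) L).
  { apply (K0 _ m zq); auto. apply Lset_directed; auto. }
  split; auto.
  intros u Hu. apply LM_trans with L; [|apply (proj2 HsL); auto].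
  assert (ML (proj1_sig L) (right z)).
  { apply ML_trans with (proj1_sig m). apply (proj2 HsL); auto. rewrite Em; apply ML_self. }
  destruct H as [w [Hw1 Hw2]].
  assert (le z w).
  { apply (proj2 Hs). intros x Hx. apply le_intro.
    - rewrite Hw1. destruct (exL x) as [a Ha]. rewrite <- Ha.
      apply (proj1 HsL). exists x; auto.
    - rewrite Hw2. apply le_elim, (proj1 Hs); auto. }
  apply leM_ML. rewrite Em, <- Hw1. apply le_elim; auto.
Qed.

End Basics.

Lemma dual_ID {D : Type} {le : D -> D -> Prop} {left right : D -> D} :
  interval_domain le left right -> interval_domain le right left.
Proof.
  intros [[Hpo [Hm [Hinf [Hj Hp]]]] [Hc [Hi [Hii [Ha [Hb Hiv]]]]]].
  split; [|split; [exact Hc|split; [|split; [|split; [exact Hb|split; [exact Ha|exact Hiv]]]]]].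
  - split; [exact Hpo|split; [intros x; split; apply Hm|split; [|split]]].
    + intros x; apply inf2_sym, Hinf.
    + intros x y E. destruct (Hj y x (eq_sym E)) as [z [Hz [E1 E2]]].
      exists z; split; [apply inf2_sym|]; auto.
    + intros x p Hpm Hxp. destruct (Hp x p Hpm Hxp) as [[z [Hz [E1 E2]]] [z' [Hz' [E1' E2']]]].
      split; [exists z'|exists z]; split; try apply inf2_sym; auto.
  - intros x p Hpm Hw. destruct (Hi x p Hpm Hw) as [H1 H2]. split.
    + intros z Hz; apply H2, inf2_sym; auto.
    + intros z Hz; apply H1, inf2_sym; auto.
  - intros x; split; apply Hii.
Qed.

Lemma leM_flip (D : Type) (le : D -> D -> Prop) (left right : D -> D) :
  @leM D le right left = fun a b => @leM D le left right b a.
Proof.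
  apply functional_extensionality; intros a; apply functional_extensionality; intros b.
  apply propositional_extensionality. unfold leM; split; intros [z [H1 H2]]; exists z; auto.
Qed.

Section Main.
Variable D : Type.
Variable le : D -> D -> Prop.
Variables left right : D -> D.
Hypothesis HD : interval_domain le left right.
Notation LM := (@leM D le left right).
Notation Fam := (@Fam D le left right).
Notation ML := (@ML D left right).

Let HD' := dual_ID HD.

Lemma K1' X z (m : MaxD le) : directed le X -> is_sup le X z -> proj1_sig m = right z ->
  is_inf LM (Lset right X) m.
Proof.
  intros. pose proof (K1 HD' X z m H H0 H1) as K. rewrite leM_flip in K. exact K.
Qed.

Definition WB' (a b : MaxD le) := forall S i, filtered LM S -> is_inf LM S i -> LM i a ->
  exists s, S s /\ LM s b.

Lemma Dcont x : exists S, (forall s, S s -> waybelow le s x) /\ directed le S /\ is_sup le S x.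
Proof.
  pose proof HD as HD0. destruct HD0 as [_ [[[_ [B H]] _] _]]. destruct (H x) as [S [H1 [H2 H3]]].
  exists S; split; [intros s Hs; apply H1, Hs|auto].
Qed.

Lemma wbD_le x y : waybelow le x y -> le x y.
Proof.
  intros H. destruct (H (fun w => w = y)) with (s := y) as [t [-> Ht]]; auto.
  - split; [exists y; auto|]. intros a b -> ->; exists y; repeat split; apply (lrefl HD).
  - split; [intros a ->; apply (lrefl HD)|]. intros u Hu; apply Hu; auto.
  - apply (lrefl HD).
Qed.

Lemma wb_le a b : waybelow LM a b -> LM a b.
Proof.
  intros H. destruct (H (fun w => w = b)) with (s := b) as [t [-> Ht]]; auto.
  - split; [exists b; auto|]. intros x y -> ->; exists b; repeat split; apply (LM_refl HD).
  - split; [intros x ->; apply (LM_refl HD)|]. intros u Hu; apply Hu; auto.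
  - apply (LM_refl HD).
Qed.

Lemma wb_mono a b c : waybelow LM a b -> LM b c -> waybelow LM a c.
Proof.
  intros H Hbc S Hd s Hs Hcs. apply (H S Hd s Hs). eapply (LM_trans HD); eauto.
Qed.

Lemma sup_unique (S : MaxD le -> Prop) a b : is_sup LM S a -> is_sup LM S b -> a = b.
Proof. intros; apply (LM_anti HD); eapply sup_least; eauto. Qed.

Lemma is_sup_ext (S S' : MaxD le -> Prop) s : (forall m, S m <-> S' m) ->
  is_sup LM S s -> is_sup LM S' s.
Proof.
  intros E [H1 H2]; split.
  - intros x Hx; apply H1, E, Hx.
  - intros u Hu; apply H2; intros x Hx; apply Hu, E, Hx.
Qed.

Lemma Fam_top A (q : MaxD le) z : directed LM A -> (forall t, A t -> LM t q) ->
  is_sup LM A q -> is_sup le (Fam A (proj1_sig q)) z -> z = proj1_sig q.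
Proof.
  intros Hd Hb Hs Hz. destruct ((exL HD) z) as [L HL].
  assert (is_sup LM A L) by (apply (K0 HD A q z L); auto).
  assert (L = q) by (eapply sup_unique; eauto). subst L.
  destruct (max_lr HD _ (proj2_sig q)) as [E1 E2].
  apply (same_ends HD); [rewrite E1; auto|rewrite E2; apply ((Fam_right HD) A q z); auto].
Qed.

Lemma wb_restricted (a b : MaxD le) :
  (forall A, directed LM A -> (forall t, A t -> LM t b) -> is_sup LM A b ->
     exists t, A t /\ LM a t) -> waybelow LM a b.
Proof.
  intros HR A Hd s Hs Hbs.
  destruct Hbs as [w [Ew1 Ew2]].
  destruct (Dcont w) as [X [HX1 [HX2 HX3]]].
  assert (Hb : b = b) by reflexivity.
  destruct (HR (Lset left X)) as [t [[x [Hx Ex]] Hat]].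
  - apply (Lset_directed HD); auto.
  - intros t [x [Hx Ex]]. apply leM_ML. rewrite <- Ex, <- Ew1. apply (le_elim HD), (proj1 HX3); auto.
  - apply (K1 HD X w b); auto.
  - destruct (dcpo_sup HD (Fam A (proj1_sig s))) as [z Hz].
    { apply (Fam_directed HD); auto. apply (proj1 Hs). }
    assert (z = proj1_sig s) by (apply (Fam_top A s z); auto; apply (proj1 Hs)).
    assert (le w z).
    { rewrite H, <- Ew2. apply (le_right HD). }
    destruct (HX1 x Hx (Fam A (proj1_sig s))) with (s := z) as [f [[Hf1 [t' [Ht' Ef]]] Hxf]]; auto.
    { apply (Fam_directed HD); auto. apply (proj1 Hs). }
    exists t'; split; auto. apply (LM_trans HD) with t; auto.
    apply leM_ML. rewrite <- Ex, <- Ef. apply (le_elim HD); auto.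
Qed.

Lemma wb_of_D x (p : MaxD le) (m : MaxD le) : waybelow le x (proj1_sig p) ->
  proj1_sig m = left x -> waybelow LM m p.
Proof.
  intros Hx Em. apply wb_restricted. intros A Hd Hb Hs.
  destruct (dcpo_sup HD (Fam A (proj1_sig p))) as [z Hz].
  { apply (Fam_directed HD); auto. }
  assert (z = proj1_sig p) by (apply (Fam_top A p z); auto).
  destruct (Hx (Fam A (proj1_sig p))) with (s := z) as [f [[Hf1 [t' [Ht' Ef]]] Hxf]]; auto.
  { apply (Fam_directed HD); auto. }
  { rewrite H; apply (lrefl HD). }
  exists t'; split; auto. apply leM_ML. rewrite Em, <- Ef. apply (le_elim HD); auto.
Qed.


Lemma wb_wb' a b : waybelow LM a b -> WB' a b.
Proof.
  intros Hab. pose proof (wb_le _ _ Hab) as Hle. destruct Hle as [x [Ex1 Ex2]].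
  pose proof HD as HD0; destruct HD0 as [_ [_ [_ [Hii _]]]].
  assert (Hw : exists w, waybelow le x w).
  { apply (proj1 (Hii x)). intros y Ey Hyx.
    destruct (exR HD y) as [c Ec].
    assert (Hac : waybelow LM a c).
    { apply wb_mono with b; auto. apply leM_ML. rewrite Ec, <- Ex2.
      apply (proj2 (le_elim HD y x Hyx)). }
    intros S HSP HSd s [Hs1 [Hs2 Hs3]] Hys.
    assert (s = right y) by (apply (rmax HD y); auto). subst s.
    assert (HA : directed LM (Lset left S)) by (apply (Lset_directed HD); auto).
    assert (HAb : forall t, Lset left S t -> LM t c).
    { intros t [u [Hu Eu]]. apply leM_ML. rewrite <- Eu, Ec, <- (HSP u Hu). apply ML_self. }
    destruct (dcpo_sup HD (Fam (Lset left S) (proj1_sig c))) as [zq Hzq].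
    { apply (Fam_directed HD); auto. }
    destruct (exL HD zq) as [L HL].
    assert (HsL : is_sup LM (Lset left S) L) by (apply (K0 HD _ c zq L); auto).
    assert (HcL : LM c L).
    { assert (HLc : LM L c) by (apply (proj2 HsL); auto).
      assert (HLc' : ML (proj1_sig L) (right y)) by (rewrite <- Ec; exact HLc).
      destruct HLc' as [w [Hw1 Hw2]].
      assert (Hw : le (right y) w).
      { apply Hs3.
        - exact Hw2.
        - intros t Ht. apply (le_intro HD).
          + rewrite Hw1. destruct (exL HD t) as [m Hm]. rewrite <- Hm.
            apply (proj1 HsL). exists t; auto.
          + rewrite Hw2, (HSP t Ht). apply (ML_refl HD), (rmax HD). }
      apply leM_ML. rewrite Ec, <- Hw1. destruct (le_elim HD _ _ Hw) as [E _].
      rewrite (proj1 (max_lr HD _ (rmax HD y))) in E. exact E. }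
    assert (Hsc : is_sup LM (Lset left S) c).
    { split; auto. intros u Hu. apply (LM_trans HD) with L; auto. apply (proj2 HsL); auto. }
    destruct (Hac (Lset left S) HA c Hsc (LM_refl HD c)) as [m [[t [Ht Et]] Ham]].
    exists t; split; auto. apply (le_intro HD).
    - rewrite Ey, Et, Ex1. exact Ham.
    - rewrite (HSP t Ht). apply (ML_refl HD), (rmax HD). }
  pose proof (proj1 (proj2 (Hii x)) Hw) as H2.
  intros S i HSf HSi Hia.
  assert (Hib : LM i b) by (apply (LM_trans HD) with a; auto; exists x; auto).
  destruct Hib as [y [Ey1 Ey2]].
  assert (Hyx : le y x).
  { apply (le_intro HD).
    - rewrite Ey1, Ex1. exact Hia.
    - rewrite Ex2, Ey2. apply (ML_refl HD), (proj2_sig b). }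
  specialize (H2 y (eq_trans Ey2 (eq_sym Ex2)) Hyx).
  destruct (H2 (fun z => left z = proj1_sig i /\ exists s, S s /\ right z = proj1_sig s))
    with (s := proj1_sig i) as [t [[Gt1 [s [Hs Es]]] Hyt]].
  - intros z [Gz _]; rewrite Gz, Ey1; auto.
  - destruct HSf as [[s0 Hs0] Hf]. split.
    + destruct (proj1 HSi s0 Hs0) as [z [Hz1 Hz2]]. exists z; split; auto. exists s0; auto.
    + intros z1 z2 [G1 [s1 [Hs1 E1]]] [G2 [s2 [Hs2 E2]]].
      destruct (Hf s1 s2 Hs1 Hs2) as [s3 [Hs3 [H31 H32]]].
      destruct (proj1 HSi s3 Hs3) as [z [Hz1 Hz2]].
      exists z; split; [split; auto; exists s3; auto|].
      split; apply (le_intro HD); rewrite ?G1, ?G2, ?Hz1, ?Hz2, ?E1, ?E2; auto;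
        apply (ML_refl HD), (proj2_sig i).
  - split; [|split].
    + rewrite Ey1. apply (max_lr HD), (proj2_sig i).
    + intros z [Gz _]. rewrite <- Gz. apply (le_left HD).
    + intros u Pu Hu. destruct (exR HD u) as [r Er].
      assert (Hri : LM r i).
      { apply (proj2 HSi). intros s Hs. destruct (proj1 HSi s Hs) as [z [Hz1 Hz2]].
        assert (le z u) by (apply Hu; split; auto; exists s; auto).
        apply leM_ML. rewrite Er, <- Hz2. apply (le_elim HD); auto. }
      assert (Hir : LM i r).
      { apply leM_ML. rewrite Er, <- Ey1, <- Pu. apply ML_self. }
      assert (r = i) by (apply (LM_anti HD); auto). subst r.
      destruct (max_lr HD _ (proj2_sig i)) as [F1 F2].
      assert (u = proj1_sig i) as -> by (apply (same_ends HD); congruence).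
      apply (lrefl HD).
  - rewrite Ey1. apply (lrefl HD).
  - exists s; split; auto. apply leM_ML. rewrite <- Es, <- Ey2. apply (le_elim HD); auto.
Qed.

End Main.
Arguments K1' {D le left right}.
Arguments Dcont {D le left right}.
Arguments wbD_le {D le left right}.
Arguments wb_le {D le left right}.
Arguments wb_mono {D le left right}.
Arguments sup_unique {D le left right}.
Arguments is_sup_ext {D le left right}.
Arguments Fam_top {D le left right}.
Arguments wb_restricted {D le left right}.
Arguments wb_of_D {D le left right}.
Arguments wb_wb' {D le left right}.

Section Main2.
Variable D : Type.
Variable le : D -> D -> Prop.
Variables left right : D -> D.
Hypothesis HD : interval_domain le left right.
Notation LM := (@leM D le left right).
Notation ML := (@ML D left right).
Notation Fam := (@Fam D le left right).
Let HD' := dual_ID HD.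
Notation WBd := (@WB' D le left right).

Lemma wb'_wb a b : WBd a b -> waybelow LM a b.
Proof.
  intros H. pose proof (wb_wb' HD' b a) as K. unfold WB' in *. rewrite leM_flip in K.
  intros S Hd s Hs Hbs.
  exact (K (fun S' Hf s' Hi Hsa => H S' s' Hf Hi Hsa) S s Hd Hs Hbs).
Qed.

Lemma wb'_of_D x (p m : MaxD le) : waybelow le x (proj1_sig p) ->
  proj1_sig m = right x -> WBd p m.
Proof.
  intros H1 H2. pose proof (wb_of_D HD' x p m H1 H2) as K. rewrite leM_flip in K.
  intros S i Hf Hi Hip. exact (K S Hf i Hi Hip).
Qed.

Lemma Lset_filtered X : directed le X -> filtered LM (Lset right X).
Proof. intros H. pose proof (Lset_directed HD' X H) as K. rewrite leM_flip in K. exact K. Qed.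

Lemma M_po : is_partial_order LM.
Proof.
  split; [|split].
  - apply (LM_refl HD).
  - apply (LM_anti HD).
  - apply (LM_trans HD).
Qed.

Lemma M_cont : continuous_poset LM.
Proof.
  split; [apply M_po|]. exists (fun _ => True). intros p.
  destruct (Dcont HD (proj1_sig p)) as [X [HX1 [HX2 HX3]]].
  exists (Lset left X). split; [|split].
  - intros s [x [Hx Ex]]. split; auto. apply (wb_of_D HD x p s); auto.
  - apply (Lset_directed HD); auto.
  - apply (K1 HD X (proj1_sig p) p); auto. symmetry; apply (max_lr HD), (proj2_sig p).
Qed.

Lemma M_bicont : bicontinuous LM.
Proof.
  split; [apply M_cont|split].
  - intros x y; split; [apply (wb_wb' HD)|apply wb'_wb].
  - intros x. destruct (Dcont HD (proj1_sig x)) as [X [HX1 [HX2 HX3]]].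
    assert (HI : is_inf LM (Lset right X) x).
    { apply (K1' HD X (proj1_sig x) x); auto. symmetry; apply (max_lr HD), (proj2_sig x). }
    assert (HF : filtered LM (Lset right X)) by (apply Lset_filtered; auto).
    assert (Hup : forall m, Lset right X m -> waybelow LM x m).
    { intros m [y [Hy Ey]]. apply wb'_wb. apply (wb'_of_D y); auto. }
    split; [split|split].
    + destruct HX2 as [[y Hy] _]. destruct (exR HD y) as [m Hm]. exists m.
      apply Hup. exists y; auto.
    + intros a1 a2 H1 H2.
      destruct (wb_wb' HD _ _ H1 _ x HF HI (LM_refl HD x)) as [s1 [[y1 [Hy1 E1]] L1]].
      destruct (wb_wb' HD _ _ H2 _ x HF HI (LM_refl HD x)) as [s2 [[y2 [Hy2 E2]] L2]].
      destruct (proj2 HX2 y1 y2 Hy1 Hy2) as [y3 [Hy3 [G1 G2]]].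
      destruct (exR HD y3) as [m Hm]. exists m. split; [apply Hup; exists y3; auto|].
      split.
      * apply (LM_trans HD) with s1; auto. apply leM_ML. rewrite Hm, <- E1.
        apply (le_elim HD); auto.
      * apply (LM_trans HD) with s2; auto. apply leM_ML. rewrite Hm, <- E2.
        apply (le_elim HD); auto.
    + intros a Ha. apply (wb_le HD); auto.
    + intros u Hu. apply (proj2 HI). intros m Hm. apply Hu, Hup, Hm.
Qed.

End Main2.

Arguments wb'_wb {D le left right}.
Arguments wb'_of_D {D le left right}.
Arguments Lset_filtered {D le left right}.
Arguments M_bicont {D le left right}.

Section Main3.
Variable D : Type.
Variable le : D -> D -> Prop.
Variables left right : D -> D.
Hypothesis HD : interval_domain le left right.
Notation LM := (@leM D le left right).

Lemma part_i (a p b : MaxD le) : waybelow LM a p -> waybelow LM p b ->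
  forall z, left z = proj1_sig a -> right z = proj1_sig b -> waybelow le z (proj1_sig p).
Proof.
  intros Hap Hpb z Ez1 Ez2 S Hd s Hs Hps.
  assert (s = proj1_sig p) by (apply (proj2_sig p); auto). subst s.
  assert (Ep : proj1_sig p = left (proj1_sig p)) by (symmetry; apply (max_lr HD), (proj2_sig p)).
  assert (Ep' : proj1_sig p = right (proj1_sig p)) by (symmetry; apply (max_lr HD), (proj2_sig p)).
  destruct (Hap (Lset left S) (Lset_directed HD S Hd) p (K1 HD S _ p Hd Hs Ep) (LM_refl HD p))
    as [m1 [[t1 [Ht1 E1]] L1]].
  destruct (wb_wb' HD _ _ Hpb (Lset right S) p (Lset_filtered HD S Hd) (K1' HD S _ p Hd Hs Ep')
    (LM_refl HD p)) as [m2 [[t2 [Ht2 E2]] L2]].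
  destruct (proj2 Hd t1 t2 Ht1 Ht2) as [t3 [Ht3 [G1 G2]]].
  exists t3; split; auto. apply (le_intro HD).
  - rewrite Ez1. apply (ML_trans HD) with (proj1_sig m1); [exact L1|].
    rewrite <- E1. apply (le_elim HD); auto.
  - rewrite Ez2. apply (ML_trans HD) with (proj1_sig m2); [|exact L2].
    rewrite <- E2. apply (le_elim HD); auto.
Qed.

Lemma wbD_trans_l x w y : le x w -> waybelow le w y -> waybelow le x y.
Proof.
  intros H1 H2 S Hd s Hs Hys. destruct (H2 S Hd s Hs Hys) as [t [Ht Hwt]].
  exists t; split; auto. apply (ltrans HD) with w; auto.
Qed.

Lemma wbD_trans_r x y y' : waybelow le x y -> le y y' -> waybelow le x y'.
Proof.
  intros H1 H2 S Hd s Hs Hys. apply (H1 S Hd s Hs). apply (ltrans HD) with y'; auto.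
Qed.

Lemma interp x y : waybelow le x y -> exists w, waybelow le x w /\ waybelow le w y.
Proof.
  intros Hxy. destruct (Dcont HD y) as [Sy [HS1 [HS2 HS3]]].
  set (Y := fun w => exists w', Sy w' /\ waybelow le w w').
  assert (HY : directed le Y).
  { split.
    - destruct HS2 as [[w' Hw'] _]. destruct (Dcont HD w') as [S' [H1 [[[u Hu] _] _]]].
      exists u, w'; auto.
    - intros w1 w2 [w1' [H1 K1]] [w2' [H2 K2]].
      destruct (proj2 HS2 w1' w2' H1 H2) as [w3 [H3 [G1 G2]]].
      destruct (Dcont HD w3) as [S3 [T1 [T2 T3]]].
      destruct (K1 S3 T2 w3 T3 G1) as [u1 [Hu1 L1]].
      destruct (K2 S3 T2 w3 T3 G2) as [u2 [Hu2 L2]].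
      destruct (proj2 T2 u1 u2 Hu1 Hu2) as [u [Hu [M1 M2]]].
      exists u; split; [exists w3; auto|]. split; [apply (ltrans HD) with u1 | apply (ltrans HD) with u2]; auto. }
  assert (HYs : is_sup le Y y).
  { split.
    - intros w [w' [H1 H2]]. apply (ltrans HD) with w'; apply (wbD_le HD); auto.
    - intros u Hu. apply (proj2 HS3). intros w' Hw'.
      destruct (Dcont HD w') as [S' [T1 [T2 T3]]].
      apply (proj2 T3). intros v Hv. apply Hu. exists w'; auto. }
  destruct (Hxy Y HY y HYs (lrefl HD y)) as [w [[w' [H1 H2]] H3]].
  exists w'; split; auto. apply wbD_trans_l with w; auto.
Qed.

Lemma part_ii V : interval_open LM V <-> @rel_scott_open D le V.
Proof.
  split.
  - intros HV.
    exists (fun d => exists (a b : MaxD le) z, (forall y, waybelow LM a y -> waybelow LM y b -> V y)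
                   /\ left z = proj1_sig a /\ right z = proj1_sig b /\ waybelow le z d).
    split; [split|].
    + intros d d' [a [b [z [H1 [H2 [H3 H4]]]]]] Hdd'. exists a, b, z; repeat split; auto.
      apply wbD_trans_r with d; auto.
    + intros S Hd s Hs [a [b [z [H1 [H2 [H3 H4]]]]]].
      destruct (interp z s H4) as [w [Hzw Hws]].
      destruct (Hws S Hd s Hs (lrefl HD s)) as [t [Ht Hwt]].
      exists t; split; auto. exists a, b, z; repeat split; auto.
      apply wbD_trans_r with w; auto.
    + intros m; split.
      * intros Hm. destruct (HV m Hm) as [a [b [Ham [Hmb Hbox]]]].
        assert (Hab : LM a b) by (apply (LM_trans HD) with m; apply (wb_le HD); auto).
        destruct Hab as [z [E1 E2]].
        exists a, b, z; repeat split; auto. apply (part_i a m b); auto.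
      * intros [a [b [z [Hbox [E1 [E2 Hz]]]]]]. apply Hbox.
        -- apply (wb_of_D HD z m a); auto.
        -- apply (wb'_wb HD). apply (wb'_of_D HD z m b); auto.
  - intros [U [[Hup Hsc] HV]] m Vm.
    destruct (Dcont HD (proj1_sig m)) as [X [HX1 [HX2 HX3]]].
    destruct (Hsc X HX2 _ HX3 (proj1 (HV m) Vm)) as [x [Hx Ux]].
    destruct (exL HD x) as [a Ea]. destruct (exR HD x) as [b Eb].
    exists a, b. split; [|split].
    + apply (wb_of_D HD x m a); auto.
    + apply (wb'_wb HD). apply (wb'_of_D HD x m b); auto.
    + intros y Ha Hb. apply HV. apply Hup with x; auto.
      apply (max_above HD).
      * rewrite <- Ea. apply (wb_le HD); auto.
      * rewrite <- Eb. apply (wb_le HD); auto.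
Qed.

Lemma compact_part (a b : MaxD le) :
  compact_wrt (interval_open LM) (fun x => LM a x /\ LM x b).
Proof.
  intros C HC Hcov. destruct (classic (LM a b)) as [Hab|Hab].
  - destruct Hab as [z [E1 E2]].
    pose proof HD as HD0. destruct HD0 as [_ [_ [_ [_ [_ [_ Hiv]]]]]].
    destruct (Hiv z C) as [l [Hl1 Hl2]].
    + intros U HU. apply part_ii, HC, HU.
    + intros m Hzm. apply Hcov. destruct (below_max HD z (proj1_sig m) (proj2_sig m) Hzm) as [G1 G2].
      split; apply leM_ML; [rewrite <- E1|rewrite <- E2]; auto.
    + exists l; split; auto. intros x [H1 H2]. apply Hl2. apply (max_above HD).
      * rewrite E1; exact H1.
      * rewrite E2; exact H2.
  - exists nil. split; [intros U []|]. intros x [H1 H2]. exfalso; apply Hab.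
    apply (LM_trans HD) with x; auto.
Qed.

End Main3.

Theorem mainTheorem13 (D : Type) (le : D -> D -> Prop) (left right : D -> D)
  (HD : interval_domain le left right) :
  (forall a p b : MaxD le,
     waybelow (leM left right) a p -> waybelow (leM left right) p b ->
     forall z : D, left z = proj1_sig a -> right z = proj1_sig b ->
       waybelow le z (proj1_sig p)) /\
  (forall V : MaxD le -> Prop,
     interval_open (leM left right) V <-> @rel_scott_open D le V) /\
  globally_hyperbolic (@leM D le left right).
Proof.
  split; [|split].
  - apply part_i; auto.
  - intros V; apply part_ii; auto.
  - split; [apply (M_bicont HD)|]. intros a b; apply compact_part; auto.
Qed.
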